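(* Let $\Sigma$ be a positive definite $5\times 5$ real matrix of the form $\Sigma=\Delta+\Gamma\Gamma^t$ with $\Delta$ positive definite diagonal and $\Gamma\in\mathbb{R}^{5\times 2}$ of rank $2$. Assume that $\Sigma$ admits no representation $\Sigma=\Delta'+\Gamma'\Gamma'^t$ with $\Delta'$ positive definite diagonal and $\Gamma'\in\mathbb{R}^{5\times 2}$ of rank at most $1$, and that every row of $\Sigma$ contains at least one nonzero off-diagonal entry. Let $k$ be the largest integer $n$ for which there is $A\subseteq\{1,\dots,5\}$ with $|A|=n$ and $\mathrm{rk}(\Gamma_A)=1$, where $\Gamma_A$ denotes the rows of $\Gamma$ indexed by $A$. Then $k\le 3$, and: (i) If $k\in\{1,2\}$, then for every representation $\Sigma=D+GG^t$ with $D$ positive definite diagonal and $G\in\mathbb{R}^{5\times 2}$, we have $GG^t=\Gamma\Gamma^t$. (ii) If $k=3$, then after permuting rows (and correspondingly rows and columns of $\Sigma$) so that $\mathrm{rk}(\Gamma_{\{1,2,3\}})=1$, there is an orthogonal $2\times 2$ matrix $Q$ such that $\Gamma Q=(\gamma_{ij})$ satisfies $\gamma_{12}=\gamma_{22}=\gamma_{32}=0$ and $\gamma_{11},\gamma_{21},\gamma_{31},\gamma_{42},\gamma_{52}$ are all nonzero. Moreover, for every other representation $\Sigma=D+GG^t$ with $D$ positive definite diagonal and $G\in\mathbb{R}^{5\times 2}$, there is an orthogonal $2\times 2$ matrix $Q'$ such that $GQ'=(g_{ij})$ has $g_{12}=g_{22}=g_{32}=0$, $g_{42}\neq0$, $g_{52}\neq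 0$, the first column of $GQ'$ equals the first column of $\Gamma Q$, and $g_{42}g_{52}=\gamma_{42}\gamma_{52}$. *)

(* Defs.v *)
From HB Require Import structures.
From mathcomp Require Import all_boot all_order all_algebra.
Set Implicit Arguments. Unset Strict Implicit. Unset Printing Implicit Defensive.
Import Order.TTheory GRing.Theory Num.Theory.
Local Open Scope ring_scope.

Definition posdiag (R : rcfType) (n : nat) (D : 'M[R]_n) : Prop :=
  (forall i j : 'I_n, i != j -> D i j = 0) /\ (forall i : 'I_n, 0 < D i i).

Definition posdef (R : rcfType) (n : nat) (S : 'M[R]_n) : Prop :=
  S^T = S /\ forall x : 'cV[R]_n, x != 0 -> 0 < (x^T *m S *m x) 0 0.

Definition orthogonal_mx (R : rcfType) (n : nat) (Q : 'M[R]_n) : Prop :=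
  Q *m Q^T = 1%:M.

Definition rows_of (R : rcfType) (m n : nat) (A : {set 'I_m}) (G : 'M[R]_(m, n))
  : 'M[R]_(#|A|, n) :=
  \matrix_(i < #|A|, j < n) G (enum_val i) j.

(* k : the largest |A| with rk(G_A) = 1 (0 if there is no such A) *)
Definition kmax (R : rcfType) (m n : nat) (G : 'M[R]_(m, n)) : nat :=
  \max_(A : {set 'I_m} | \rank (rows_of A G) == 1%N) #|A|.

(* Main.v *)
Require Import Defs.
From HB Require Import structures.
From mathcomp Require Import all_boot all_order all_algebra.
From Stdlib Require Import Ring.
Set Implicit Arguments. Unset Strict Implicit. Unset Printing Implicit Defensive.
Import Order.TTheory GRing.Theory Num.Theory.

Section Gen.
Variable T : Type.
Variables (z o : T) (ad mu : T -> T -> T) (op : T -> T).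
Variable rth : ring_theory z o ad mu (fun x y => ad x (op y)) op (@eq T).
Add Ring GR : rth.
Local Infix "+" := ad.
Local Infix "*" := mu.
Local Notation "x - y" := (ad x (op y)).
Local Notation "- x" := (op x).
Local Notation DD a0 a1 b0 b1 := (ad (mu a0 b0) (mu a1 b1)).

Lemma g_cb j0 j1 l0 l1 p0 p1 q0 q1 :
  DD j0 j1 p0 p1 * DD l0 l1 q0 q1 - DD j0 j1 q0 q1 * DD l0 l1 p0 p1
  = (j0 * l1 - j1 * l0) * (p0 * q1 - p1 * q0).
Proof. ring. Qed.

Lemma g_gram3 i0 i1 j0 j1 l0 l1 p0 p1 q0 q1 :
  DD i0 i1 i0 i1 * (DD j0 j1 p0 p1 * DD l0 l1 q0 q1 - DD j0 j1 q0 q1 * DD l0 l1 p0 p1)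
  - DD i0 i1 p0 p1 * (DD j0 j1 i0 i1 * DD l0 l1 q0 q1 - DD j0 j1 q0 q1 * DD l0 l1 i0 i1)
  + DD i0 i1 q0 q1 * (DD j0 j1 i0 i1 * DD l0 l1 p0 p1 - DD j0 j1 p0 p1 * DD l0 l1 i0 i1) = z.
Proof. ring. Qed.

Lemma g_lag a0 a1 i0 i1 j0 j1 :
  DD a0 a1 a0 a1 * DD i0 i1 j0 j1 - DD i0 i1 a0 a1 * DD j0 j1 a0 a1
  = (a0 * i1 - a1 * i0) * (a0 * j1 - a1 * j0).
Proof. ring. Qed.

Lemma g_trans a0 a1 b0 b1 c0 c1 :
  DD b0 b1 b0 b1 * (a0 * c1 - a1 * c0) =
  b0 * (a0 * (b0 * c1-b1 * c0) + c0 * (a0 * b1-a1 * b0)) + b1 * (a1 * (b0 * c1-b1 * c0) + c1 * (a0 * b1-a1 * b0)).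
Proof. ring. Qed.

Lemma g_scal0 i0 i1 a0 a1 :
  i0 * DD a0 a1 a0 a1 = DD i0 i1 a0 a1 * a0 - a1 * (a0 * i1 - a1 * i0).
Proof. ring. Qed.
Lemma g_scal1 i0 i1 a0 a1 :
  i1 * DD a0 a1 a0 a1 = DD i0 i1 a0 a1 * a1 + a0 * (a0 * i1 - a1 * i0).
Proof. ring. Qed.

Lemma g_col0 a0 a1 b0 b1 t : a0 * (b0 * t) + a1 * (b1 * t) = DD a0 a1 b0 b1 * t.
Proof. ring. Qed.
Lemma g_col1 a0 a1 b0 b1 t : a0 * ((- b1) * t) + a1 * (b0 * t) = (b0 * a1 - b1 * a0) * t.
Proof. ring. Qed.

Lemma g_o00 v0 v1 t : (v0 * t) * (v0 * t) + ((- v1) * t) * ((- v1) * t) = (v0 * v0+v1 * v1) * (t * t).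
Proof. ring. Qed.
Lemma g_o01 v0 v1 t : (v0 * t) * (v1 * t) + ((- v1) * t) * (v0 * t) = z.
Proof. ring. Qed.
Lemma g_o10 v0 v1 t : (v1 * t) * (v0 * t) + (v0 * t) * ((- v1) * t) = z.
Proof. ring. Qed.
Lemma g_o11 v0 v1 t : (v1 * t) * (v1 * t) + (v0 * t) * (v0 * t) = (v0 * v0+v1 * v1) * (t * t).
Proof. ring. Qed.

Lemma g_Dp X P Q Y t : X - ((P * t) * (Q * t) + z * z) = (Y * X - P * Q) * (t * t) + X * (o - Y * (t * t)).
Proof. ring. Qed.

Lemma g_inv00 i0 i1 j0 j1 t : i0 * (j1 * t) + i1 * ((- j0) * t) = (i0 * j1 - i1 * j0) * t.
Proof. ring. Qed.
Lemma g_inv01 i0 i1 t : i0 * ((- i1) * t) + i1 * (i0 * t) = z.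
Proof. ring. Qed.
Lemma g_inv10 j0 j1 t : j0 * (j1 * t) + j1 * ((- j0) * t) = z.
Proof. ring. Qed.
Lemma g_inv11 i0 i1 j0 j1 t : j0 * ((- i1) * t) + j1 * (i0 * t) = (i0 * j1 - i1 * j0) * t.
Proof. ring. Qed.

Lemma g_prod x y t : (x * t) * (y * t) = x * y * (t * t).
Proof. ring. Qed.
Lemma g_sub x x' m Y Z : (x * m - Y + Z) - (x' * m - Y + Z) = (x - x') * m.
Proof. ring. Qed.
Lemma g_anti a0 a1 b0 b1 : b0 * a1 - b1 * a0 = - (a0 * b1 - a1 * b0).
Proof. ring. Qed.
End Gen.

Local Open Scope ring_scope.


Lemma RthR (R : comNzRingType) : @ring_theory R 0 1 +%R *%R (fun x y => x - y) -%R eq.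
Proof.
split=> //=; [exact: add0r|exact: addrC|exact: addrA|exact: mul1r|exact: mulrC|exact: mulrA|exact: mulrDl|exact: subrr].
Qed.

Definition dt (R : rcfType) (M : 'M[R]_(5,2)) (i j : 'I_5) : R :=
  M i ord0 * M j ord0 + M i ord_max * M j ord_max.
Definition dtm (R : rcfType) (M : 'M[R]_(5,2)) (i j : 'I_5) : R :=
  M i ord0 * M j ord_max - M i ord_max * M j ord0.

Section R.
Variable R : rcfType.
Implicit Types (M G : 'M[R]_(5,2)).

Lemma ord2P (c : 'I_2) : c = ord0 \/ c = ord_max.
Proof. by case: c => [[|[|//]]] ?; [left|right]; apply: val_inj. Qed.

Lemma sum2 (F : 'I_2 -> R) : \sum_(k < 2) F k = F ord0 + F ord_max.
Proof. by rewrite big_ord_recr big_ord1; congr (F _ + _); apply: val_inj. Qed.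

Lemma gramE M i j : (M *m M^T) i j = dt M i j.
Proof. by rewrite !mxE sum2 !mxE. Qed.

Lemma gram3 M i j l p q :
  dt M i i * (dt M j p * dt M l q - dt M j q * dt M l p)
  - dt M i p * (dt M j i * dt M l q - dt M j q * dt M l i)
  + dt M i q * (dt M j i * dt M l p - dt M j p * dt M l i) = 0.
Proof. exact: (@g_gram3 _ _ _ _ _ _ (RthR R)). Qed.

Lemma cbE M j l p q : dt M j p * dt M l q - dt M j q * dt M l p = dtm M j l * dtm M p q.
Proof. exact: (@g_cb _ _ _ _ _ _ (RthR R)). Qed.

Lemma lagE M a i j : dt M a a * dt M i j - dt M i a * dt M j a = dtm M a i * dtm M a j.
Proof. exact: (@g_lag _ _ _ _ _ _ (RthR R)). Qed.

Lemma dt_sym M i j : dt M i j = dt M j i.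
Proof. by rewrite /dt mulrC [M i ord_max * _]mulrC. Qed.

Lemma dtm_anti M i j : dtm M j i = - dtm M i j.
Proof. exact: (@g_anti _ _ _ _ _ _ (RthR R)). Qed.

Lemma dtm_sym0 M i j : dtm M i j = 0 -> dtm M j i = 0.
Proof. by move=> h; rewrite dtm_anti h oppr0. Qed.

Lemma dtm_ii M i : dtm M i i = 0.
Proof. by rewrite /dtm mulrC subrr. Qed.

Lemma dt_ge0 M i : 0 <= dt M i i.
Proof. by rewrite /dt addr_ge0 // -expr2 sqr_ge0. Qed.

Lemma dtm_trans M a b c : dt M b b != 0 -> dtm M a b = 0 -> dtm M b c = 0 -> dtm M a c = 0.
Proof.
move=> nz hab hbc.
have E := @g_trans _ _ _ _ _ _ (RthR R) (M a ord0) (M a ord_max) (M b ord0) (M b ord_max) (M c ord0) (M c ord_max).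
move: E; rewrite -/(dtm M a c) -/(dtm M b c) -/(dtm M a b) -/(dt M b b) hab hbc.
rewrite !(mulr0, addr0) =>  /eqP; rewrite mulf_eq0 (negbTE nz) /= => /eqP //.
Qed.

End R.

Definition rotQ (R : rcfType) (M : 'M[R]_(5,2)) (a : 'I_5) : 'M[R]_2 :=
  \matrix_(r, c) ((if r == ord0 then (if c == ord0 then M a ord0 else - M a ord_max)
                   else (if c == ord0 then M a ord_max else M a ord0))
                  * (Num.sqrt (dt M a a))^-1).

Section R2.
Variable R : rcfType.
Implicit Types (M G : 'M[R]_(5,2)).

Lemma rotQ0 M a i : (M *m rotQ M a) i ord0 = dt M i a * (Num.sqrt (dt M a a))^-1.
Proof. rewrite !mxE sum2 !mxE /=. exact: (@g_col0 _ _ _ _ _ _ (RthR R)). Qed.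

Lemma rotQ1 M a i : (M *m rotQ M a) i ord_max = dtm M a i * (Num.sqrt (dt M a a))^-1.
Proof. rewrite !mxE sum2 !mxE /=. exact: (@g_col1 _ _ _ _ _ _ (RthR R)). Qed.

Lemma sqrt_facts M a : dt M a a != 0 ->
  let s := Num.sqrt (dt M a a) in dt M a a * (s^-1 * s^-1) = 1.
Proof.
move=> nz s.
have hp : 0 < dt M a a by rewrite lt0r nz dt_ge0.
have hs : s != 0 by rewrite gt_eqF // sqrtr_gt0.
have -> : dt M a a = s * s by rewrite -expr2 sqr_sqrtr // ltW.
by rewrite mulrACA mulfV // mulr1.
Qed.

Lemma rotQ_orth M a : dt M a a != 0 -> orthogonal_mx (rotQ M a).
Proof.
move=> nz; have E := sqrt_facts nz.
apply/matrixP => r c; rewrite !mxE sum2 !mxE /=.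
case: r => [[|[|//]]] ?; case: c => [[|[|//]]] ? /=.
- rewrite (@g_o00 _ _ _ _ _ _ (RthR R)); exact: E.
- exact: (@g_o01 _ _ _ _ _ _ (RthR R)).
- exact: (@g_o10 _ _ _ _ _ _ (RthR R)).
- rewrite (@g_o11 _ _ _ _ _ _ (RthR R)); exact: E.
Qed.


Lemma Dp_entry (D : 'M[R]_5) G a i j : dt G a a != 0 ->
  let t := (Num.sqrt (dt G a a))^-1 in
  let G' : 'M[R]_(5,2) := \matrix_(k, c) (if c == ord0 then dt G k a * t else 0) in
  (D + G *m G^T - G' *m G'^T) i j = D i j + dtm G a i * dtm G a j * (t * t).
Proof.
move=> nz t G'.
rewrite !mxE !sum2 !mxE /= -addrA; congr (_ + _).
rewrite (@g_Dp _ _ _ _ _ _ (RthR R) _ _ _ (dt G a a)).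
rewrite -/(dt G i j) lagE sqrt_facts // subrr mulr0 addr0 //.
Qed.

Lemma rank1_rep (D : 'M[R]_5) G a : posdiag D -> dt G a a != 0 ->
  (forall i j, dtm G a i != 0 -> dtm G a j != 0 -> i = j) ->
  exists (D' : 'M[R]_5) (G' : 'M[R]_(5,2)),
    posdiag D' /\ (\rank G' <= 1)%N /\ D + G *m G^T = D' + G' *m G'^T.
Proof.
move=> [Doff Ddiag] nz hpar.
set t := (Num.sqrt (dt G a a))^-1.
set G' : 'M[R]_(5,2) := \matrix_(k, c) (if c == ord0 then dt G k a * t else 0).
exists (D + G *m G^T - G' *m G'^T), G'; split; [|split].
- split=> [i j hij|i]; rewrite Dp_entry //.
  + rewrite Doff // add0r.
    case: (eqVneq (dtm G a i) 0) => [->|hi]; first by rewrite !mul0r.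
    case: (eqVneq (dtm G a j) 0) => [->|hj]; first by rewrite mulr0 mul0r.
    by move/eqP: hij; case; apply: hpar.
  + apply: ltr_wpDr; last exact: Ddiag.
    by apply: mulr_ge0; rewrite -expr2 sqr_ge0.
- have -> : G' = (\col_k (dt G k a * t)) *m (\row_c (if c == ord0 then (1:R) else 0)).
    apply/matrixP => k c; rewrite !mxE big_ord1 !mxE.
    by case: (c == ord0); rewrite ?mulr1 ?mulr0.
  exact: leq_trans (mxrankM_maxr _ _) (rank_leq_row _).
- by rewrite subrK.
Qed.

Lemma nopar (Sigma D : 'M[R]_5) G a : posdiag D -> Sigma = D + G *m G^T ->
  ~ (exists (D' : 'M[R]_5) (G' : 'M[R]_(5, 2)),
        posdiag D' /\ (\rank G' <= 1)%N /\ Sigma = D' + G' *m G'^T) ->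
  dt G a a != 0 ->
  ~ (forall i j, dtm G a i != 0 -> dtm G a j != 0 -> i = j).
Proof.
move=> hD -> hno nz hpar; apply: hno; exact: rank1_rep hD nz hpar.
Qed.

Lemma nz_of M i j : dt M i j != 0 -> dt M i i != 0.
Proof.
apply: contraNN => /eqP h.
have h0 : 0 <= M i ord0 * M i ord0 by rewrite -expr2 sqr_ge0.
have h1 : 0 <= M i ord_max * M i ord_max by rewrite -expr2 sqr_ge0.
move: h; rewrite /dt => /eqP; rewrite paddr_eq0 // -!expr2 !sqrf_eq0 => /andP[/eqP-> /eqP->].
by rewrite !mul0r addr0.
Qed.

Lemma rank1_par M (A : {set 'I_5}) i j :
  \rank (rows_of A M) = 1%N -> i \in A -> j \in A -> dtm M i j = 0.
Proof.
move=> hr hi hj; case: (eqVneq (dtm M i j) 0) => // hnz; exfalso.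
set M2 : 'M[R]_2 := \matrix_(r, c) M (if r == ord0 then i else j) c.
set t := (dtm M i j)^-1.
set B : 'M[R]_2 := \matrix_(r, c) ((if r == ord0 then (if c == ord0 then M j ord_max else - M i ord_max)
                   else (if c == ord0 then - M j ord0 else M i ord0)) * t).
have hinv : M2 *m B = 1%:M.
  apply/matrixP => r c; rewrite !mxE sum2 !mxE /=.
  case: r => [[|[|//]]] ?; case: c => [[|[|//]]] ? /=.
  - by rewrite (@g_inv00 _ _ _ _ _ _ (RthR R)) -/(dtm M i j) mulfV.
  - exact: (@g_inv01 _ _ _ _ _ _ (RthR R)).
  - exact: (@g_inv10 _ _ _ _ _ _ (RthR R)).
  - by rewrite (@g_inv11 _ _ _ _ _ _ (RthR R)) -/(dtm M i j) mulfV.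
have [hu _] := mulmx1_unit hinv.
have h2 : \rank M2 = 2%N by move: hu; rewrite -row_free_unit => /eqP.
have hs : (M2 <= rows_of A M)%MS.
  apply/row_subP => r.
  have -> : row r M2 = row (if r == ord0 then enum_rank_in hi i else enum_rank_in hj j) (rows_of A M).
    apply/rowP => c; rewrite !mxE.
    by case: (r == ord0); rewrite enum_rankK_in.
  exact: row_sub.
by have := mxrankS hs; rewrite h2 hr.
Qed.

Lemma rank1_of_par M (A : {set 'I_5}) a : a \in A -> dt M a a != 0 ->
  (forall i, i \in A -> dtm M a i = 0) -> \rank (rows_of A M) = 1%N.
Proof.
move=> ha nz hp; apply/eqP; rewrite eqn_leq; apply/andP; split.
- apply: leq_trans (mxrankS _) (rank_leq_row (row a M)).
  apply/row_subP => k.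
  have hu : enum_val k \in A := enum_valP k.
  set u := enum_val k in hu *.
  have -> : row k (rows_of A M) = (dt M u a / dt M a a) *: row a M.
    apply/rowP => c; rewrite !mxE -/u.
    case: (ord2P c) => ->.
    + have E := @g_scal0 _ _ _ _ _ _ (RthR R) (M u ord0) (M u ord_max) (M a ord0) (M a ord_max).
      move: E; rewrite -/(dt M a a) -/(dt M u a) -/(dtm M a u) hp // mulr0 subr0 => E.
      apply: (mulIf nz); by rewrite E mulrAC divfK.
    + have E := @g_scal1 _ _ _ _ _ _ (RthR R) (M u ord0) (M u ord_max) (M a ord0) (M a ord_max).
      move: E; rewrite -/(dt M a a) -/(dt M u a) -/(dtm M a u) hp // mulr0 addr0 => E.
      apply: (mulIf nz); by rewrite E mulrAC divfK.
  exact: scalemx_sub (submx_refl _).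
- rewrite lt0n mxrank_eq0; apply/eqP => h0.
  have hc : forall c, M a c = 0.
    move=> c; move: (congr1 (fun X : 'M[R]_(#|A|, 2) => X (enum_rank_in ha a) c) h0).
    by rewrite !mxE enum_rankK_in.
  by move: nz; rewrite /dt !hc mulr0 addr0 eqxx.
Qed.

End R2.

Section R3.
Variable R : rcfType.
Implicit Types (M G Gm : 'M[R]_(5,2)).

Lemma cancel_lin (x x' m Y Z : R) : x * m - Y + Z = 0 -> x' * m - Y + Z = 0 -> m != 0 -> x = x'.
Proof.
move=> h1 h2 hm; apply/eqP; rewrite -subr_eq0; apply/eqP; apply: (mulIf hm).
by rewrite mul0r -(@g_sub _ _ _ _ _ _ (RthR R) x x' m Y Z) h1 h2 subrr.
Qed.

Lemma determ_pair Gm G i j l p q :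
  (forall u v, u != v -> dt G u v = dt Gm u v) ->
  j != p -> l != q -> j != q -> l != p -> i != p -> j != i -> l != i -> i != q ->
  dtm Gm j l != 0 -> dtm Gm p q != 0 -> dt G i i = dt Gm i i.
Proof.
move=> heq hjp hlq hjq hlp hip hji hli hiq n1 n2.
have EG := gram3 G i j l p q; have EM := gram3 Gm i j l p q.
rewrite (heq j p hjp) (heq l q hlq) (heq j q hjq) (heq l p hlp) (heq i p hip)
  (heq j i hji) (heq l i hli) (heq i q hiq) in EG.
apply: (cancel_lin EG EM).
by rewrite cbE mulf_neq0.
Qed.

Lemma determ Gm G i p q r s :
  (forall u v, u != v -> dt G u v = dt Gm u v) ->
  (forall u, dt Gm u u != 0) ->
  (forall u v w, v != w -> dtm Gm u v = 0 -> dtm Gm u w = 0 -> u != v -> u != w -> False) ->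
  i != p -> i != q -> i != r -> i != s -> p != q -> p != r -> p != s ->
  q != r -> q != s -> r != s ->
  dt G i i = dt Gm i i.
Proof.
move=> heq nz notri hip hiq hir his hpq hpr hps hqr hqs hrs.
have sy : forall x y : 'I_5, x != y -> y != x by move=> x y; rewrite eq_sym.
case: (eqVneq (dtm Gm p q) 0) => Epq.
- have Npr : dtm Gm p r != 0.
    by apply/eqP => E; apply: (notri p q r).
  have Nps : dtm Gm p s != 0.
    by apply/eqP => E; apply: (notri p q s).
  case: (eqVneq (dtm Gm q s) 0) => Eqs.
  + have Nqr : dtm Gm q r != 0.
      apply/eqP => E; apply: (notri q p r) => //; try exact: sy; exact: dtm_sym0.
    by apply: (determ_pair (j:=p) (l:=s) (p:=q) (q:=r)) => //; apply: sy.
  + by apply: (determ_pair (j:=p) (l:=r) (p:=q) (q:=s)) => //; apply: sy.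
- case: (eqVneq (dtm Gm r s) 0) => Ers.
  + have Npr : dtm Gm p r != 0.
      apply/eqP => E; apply: (notri r p s) => //; try exact: sy; exact: dtm_sym0.
    have Nqs : dtm Gm q s != 0.
      apply/eqP => E; apply: (notri s q r) => //; try exact: sy; exact: dtm_sym0.
    by apply: (determ_pair (j:=p) (l:=r) (p:=q) (q:=s)) => //; apply: sy.
  + by apply: (determ_pair (j:=p) (l:=q) (p:=r) (q:=s)) => //; apply: sy.
Qed.

Lemma notri_of_kmax M : (kmax M <= 2)%N -> (forall u, dt M u u != 0) ->
  forall u v w, v != w -> dtm M u v = 0 -> dtm M u w = 0 -> u != v -> u != w -> False.
Proof.
move=> hk nz u v w hvw huv huw hv hw.
set A := u |: [set v; w].
have hc : #|A| = 3%N by rewrite cardsU1 in_set2 (negbTE hv) (negbTE hw) cards2 hvw.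
have hr : \rank (rows_of A M) = 1%N.
  apply: (rank1_of_par (a:=u)); first by rewrite setU11.
    exact: nz.
  move=> x; rewrite in_setU1 in_set2 => /orP [/eqP -> | /orP [/eqP -> | /eqP ->]] //.
  exact: dtm_ii.
have : (#|A| <= kmax M)%N.
  rewrite /kmax; apply: (leq_bigmax_cond (F := fun B : {set 'I_5} => #|B|)).
  by rewrite hr.
by rewrite hc => h; move: (leq_trans h hk).
Qed.

Lemma others5 (i : 'I_5) : exists p q r s : 'I_5,
  [/\ [&& i != p, i != q, i != r & i != s], [&& p != q, p != r & p != s]
    & [&& q != r, q != s & r != s]].
Proof.
case: i => [[|[|[|[|[|//]]]]]] Hi.
- by exists (@Ordinal 5 1 isT), (@Ordinal 5 2 isT), (@Ordinal 5 3 isT), (@Ordinal 5 4 isT).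
- by exists (@Ordinal 5 0 isT), (@Ordinal 5 2 isT), (@Ordinal 5 3 isT), (@Ordinal 5 4 isT).
- by exists (@Ordinal 5 0 isT), (@Ordinal 5 1 isT), (@Ordinal 5 3 isT), (@Ordinal 5 4 isT).
- by exists (@Ordinal 5 0 isT), (@Ordinal 5 1 isT), (@Ordinal 5 2 isT), (@Ordinal 5 4 isT).
- by exists (@Ordinal 5 0 isT), (@Ordinal 5 1 isT), (@Ordinal 5 2 isT), (@Ordinal 5 3 isT).
Qed.

Lemma outside (Sigma D : 'M[R]_5) M (A : {set 'I_5}) a d e :
  posdiag D -> Sigma = D + M *m M^T ->
  ~ (exists (D' : 'M[R]_5) (G' : 'M[R]_(5, 2)),
        posdiag D' /\ (\rank G' <= 1)%N /\ Sigma = D' + G' *m G'^T) ->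
  dt M a a != 0 -> ~: A = [set d; e] ->
  (forall i, i \in A -> dtm M a i = 0) ->
  forall i, i \notin A -> dtm M a i != 0.
Proof.
move=> hD hS hno nz hC hpar i hi; apply/eqP => h0.
apply: (nopar hD hS hno nz) => u v hu hv.
have notA : forall x, dtm M a x != 0 -> (x == d) || (x == e).
  move=> x hx; rewrite -in_set2 -hC in_setC; apply/negP => xA.
  by move: hx; rewrite hpar // eqxx.
have hi' : (i == d) || (i == e) by rewrite -in_set2 -hC in_setC.
have hui : u != i by apply: contraNneq hu => ->; rewrite h0.
have hvi : v != i by apply: contraNneq hv => ->; rewrite h0.
move: (notA u hu) (notA v hv) hi' hui hvi.
by case/orP => /eqP ->; case/orP => /eqP ->; case/orP => /eqP -> //; rewrite eqxx.
Qed.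

End R3.

Ltac neq := match goal with |- is_true (?x != ?y) => first [assumption | rewrite eq_sym; assumption] end.

Lemma offdiag (R : rcfType) (Sigma D : 'M[R]_5) (G : 'M[R]_(5,2)) u v :
  posdiag D -> Sigma = D + G *m G^T -> u != v -> Sigma u v = dt G u v.
Proof. by move=> [Doff _] -> huv; rewrite mxE Doff // add0r gramE. Qed.

Unset Implicit Arguments.

Theorem lemma4 (R : rcfType) (Sigma Delta : 'M[R]_5) (Gamma : 'M[R]_(5, 2)) :
  posdef Sigma ->
  posdiag Delta ->
  \rank Gamma = 2%N ->
  Sigma = Delta + Gamma *m Gamma^T ->
  ~ (exists (D' : 'M[R]_5) (G' : 'M[R]_(5, 2)),
        posdiag D' /\ (\rank G' <= 1)%N /\ Sigma = D' + G' *m G'^T) ->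
  (forall i : 'I_5, exists j : 'I_5, j != i /\ Sigma i j != 0) ->
  [/\ (kmax Gamma <= 3)%N,
      (kmax Gamma = 1%N \/ kmax Gamma = 2%N) ->
        forall (D : 'M[R]_5) (G : 'M[R]_(5, 2)),
          posdiag D -> Sigma = D + G *m G^T -> G *m G^T = Gamma *m Gamma^T
    & kmax Gamma = 3%N ->
        forall A : {set 'I_5}, #|A| = 3%N -> \rank (rows_of A Gamma) = 1%N ->
        exists Q : 'M[R]_2,
          [/\ orthogonal_mx Q,
              forall i, i \in A -> (Gamma *m Q) i ord_max = 0,
              forall i, i \in A -> (Gamma *m Q) i ord0 != 0,
              forall i, i \notin A -> (Gamma *m Q) i ord_max != 0
            & forall (D : 'M[R]_5) (G : 'M[R]_(5, 2)),
                posdiag D -> Sigma = D + G *m G^T ->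
                exists Q' : 'M[R]_2,
                  [/\ orthogonal_mx Q',
                      forall i, i \in A -> (G *m Q') i ord_max = 0,
                      forall i, i \notin A -> (G *m Q') i ord_max != 0,
                      forall i, (G *m Q') i ord0 = (Gamma *m Q) i ord0
                    & \prod_(i in ~: A) (G *m Q') i ord_max
                      = \prod_(i in ~: A) (Gamma *m Q) i ord_max]]].
Proof.
move=> _ hDel _ hS hno hrow.
have heqG : forall (D : 'M[R]_5) (G : 'M[R]_(5,2)), posdiag D -> Sigma = D + G *m G^T ->
    forall u v, u != v -> dt G u v = dt Gamma u v.
  by move=> D G hD hSG u v huv; rewrite -(offdiag hD hSG huv) (offdiag hDel hS huv).
have nzG : forall u, dt Gamma u u != 0.
  move=> u; have [j [hj hs]] := hrow u.
  apply: (@nz_of _ _ u j); rewrite -(offdiag hDel hS) //; by rewrite eq_sym.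
split.
-
  apply/bigmax_leqP => A /eqP hr; rewrite leqNgt; apply/negP => h4.
  have [a ha] : exists a, a \in A by apply/card_gt0P; apply: leq_trans h4.
  apply: (nopar hDel hS hno (nzG a)) => i j hi hj.
  have notA : forall x, dtm Gamma a x != 0 -> x \in ~: A.
    move=> x hx; rewrite in_setC; apply/negP => xA.
    by move: hx; rewrite (rank1_par hr ha xA) eqxx.
  have hC : (#|~: A| <= 1)%N.
    have := cardsC A; rewrite card_ord => E.
    by rewrite -(leq_add2l #|A|) E addn1 ltnS.
  by move/card_le1P: hC => /(_ i (notA i hi) j); rewrite (notA j hj) inE => /esym /eqP ->.
-
  move=> hk D G hD hSG.
  have hk2 : (kmax Gamma <= 2)%N by case: hk => ->.
  have notri := notri_of_kmax hk2 nzG.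
  have heq := heqG D G hD hSG.
  apply/matrixP => u v; rewrite !gramE.
  case: (eqVneq u v) => [<-|huv]; last exact: heq.
  have [p [q [r [s [h1 h2 h3]]]]] := others5 u.
  move/and4P: h1 => [? ? ? ?]; move/and3P: h2 => [? ? ?]; move/and3P: h3 => [? ? ?].
  by apply: (determ (p:=p) (q:=q) (r:=r) (s:=s)).
-
  move=> _ A hA3 hrA.
  have [a ha] : exists a, a \in A by apply/card_gt0P; rewrite hA3.
  have : #|A :\ a| == 2%N.
    by move: hA3; rewrite (cardsD1 a) ha add1n => -[->].
  case/cards2P => b [c [hbc hAa]].
  have : #|~: A| == 2%N.
    by have := cardsC A; rewrite hA3 card_ord => /eqP; rewrite -[5%N]/(3 + 2)%N eqn_add2l.
  case/cards2P => d [e [hde hC]].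
  have : b \in A :\ a by rewrite hAa !inE eqxx.
  rewrite in_setD1 => /andP[hba hbA].
  have : c \in A :\ a by rewrite hAa !inE eqxx orbT.
  rewrite in_setD1 => /andP[hca hcA].
  have : d \in ~: A by rewrite hC !inE eqxx.
  rewrite in_setC => hdA.
  have : e \in ~: A by rewrite hC !inE eqxx orbT.
  rewrite in_setC => heA.
  have nAA : forall x y, x \notin A -> y \in A -> x != y.
    by move=> x y hx hy; apply: contraNneq hx => ->.
  have hda := nAA d a hdA ha; have hdb := nAA d b hdA hbA; have hdc := nAA d c hdA hcA.
  have hea := nAA e a heA ha; have heb := nAA e b heA hbA; have hec := nAA e c heA hcA.
  have hAdef : A = a |: [set b; c] by rewrite -hAa setD1K.
  have memA : forall i, i \in A -> [\/ i = a, i = b | i = c].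
    move=> i; rewrite hAdef in_setU1 in_set2 => /orP [/eqP ->| /orP [/eqP ->| /eqP ->]].
    + exact: Or31. + exact: Or32. + exact: Or33.
  have parA : forall i, i \in A -> dtm Gamma a i = 0 := fun i hi => rank1_par hrA ha hi.
  have outA := outside hDel hS hno (nzG a) hC parA.
  have crossA : forall u v, u \in A -> v \notin A -> dtm Gamma u v != 0.
    move=> u v hu hv; apply/eqP => h; move: (outA v hv); apply/negP; rewrite negbK.
    by apply/eqP; apply: (dtm_trans (b:=u)) (nzG u) (parA u hu) h.
  have sqnz : forall (M : 'M[R]_(5,2)) x, dt M x x != 0 -> (Num.sqrt (dt M x x))^-1 != 0.
    move=> M x hx; rewrite invr_neq0 // gt_eqF // sqrtr_gt0 lt0r hx dt_ge0 //.
  exists (rotQ Gamma a); split.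
  + exact: rotQ_orth (nzG a).
  + by move=> i hi; rewrite rotQ1 parA // mul0r.
  + move=> i hi; rewrite rotQ0 mulf_neq0 //; last exact: sqnz (nzG a).
    have L := lagE Gamma a i i; rewrite (parA i hi) mul0r in L.
    apply/eqP => h0; move: L; rewrite h0 mul0r subr0 => /eqP.
    by rewrite mulf_eq0 (negbTE (nzG a)) (negbTE (nzG i)).
  + move=> i hi; rewrite rotQ1 mulf_neq0 //; [exact: outA | exact: sqnz (nzG a)].
  + move=> D G hD hSG.
    have heq := heqG D G hD hSG.
    have diagA : forall i, i \in A -> dt G i i = dt Gamma i i.
      move=> i /memA [->|->|->].
      * by apply: (determ_pair (j:=b) (l:=d) (p:=c) (q:=e)) heq _ _ _ _ _ _ _ _
          (crossA b d hbA hdA) (crossA c e hcA heA); neq.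
      * by apply: (determ_pair (j:=a) (l:=d) (p:=c) (q:=e)) heq _ _ _ _ _ _ _ _
          (crossA a d ha hdA) (crossA c e hcA heA); neq.
      * by apply: (determ_pair (j:=a) (l:=d) (p:=b) (q:=e)) heq _ _ _ _ _ _ _ _
          (crossA a d ha hdA) (crossA b e hbA heA); neq.
    have parG : forall i, i \in A -> dtm G a i = 0.
      move=> i hi; case: (eqVneq i a) => [->|hia]; first exact: dtm_ii.
      have L := lagE G a i i.
      rewrite (diagA a ha) (diagA i hi) (heq i a hia) lagE (parA i hi) mul0r in L.
      by move/esym/eqP: L; rewrite mulf_eq0 orbb => /eqP.
    have nzGa : dt G a a != 0 by rewrite diagA.
    have outG := outside hD hSG hno nzGa hC parG.
    exists (rotQ G a); split.
    * exact: rotQ_orth nzGa.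
    * by move=> i hi; rewrite rotQ1 parG // mul0r.
    * move=> i hi; rewrite rotQ1 mulf_neq0 //; [exact: outG | exact: sqnz nzGa].
    * move=> i; rewrite !rotQ0 (diagA a ha); case: (eqVneq i a) => [->|hia].
        by rewrite diagA.
      by rewrite heq.
    * rewrite hC big_setU1 ?big_set1 /=; last by rewrite in_set1.
      rewrite big_setU1 ?big_set1 /=; last by rewrite in_set1.
      rewrite !rotQ1 (diagA a ha) !(@g_prod _ _ _ _ _ _ (RthR R)); congr (_ * _).
      rewrite -!lagE (diagA a ha) (heq d e hde) (heq d a hda) (heq e a hea) //.
Qed.
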